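(* Let $q$ be a self-join-free Boolean conjunctive query, let $q_0\subseteq q$, let $\mathbf{db}$ be a database, and let $\mathbf{o}$ be a garbage set for $q_0$ in $\mathbf{db}$. Then every garbage set for $q_0$ in $\mathbf{db}\setminus\mathbf{o}$ is empty if and only if $\mathbf{o}$ is the maximal (with respect to $\subseteq$) garbage set for $q_0$ in $\mathbf{db}$.
   Context: Every relation name has a signature $[n,k]$ ($1\le k\le n$; primary-key positions $1,\dots,k$) and a mode in $\{\mathsf{c},\mathsf{i}\}$. Facts are variable-free atoms; facts are key-equal if same relation name and same primary-key values. A database is a finite set of facts with no two distinct key-equal facts of mode $\mathsf{c}$, all of whose relation names occur in $q$. The block of a fact $A$ in $\mathbf{db}$ is the set of facts of $\mathbf{db}$ key-equal to $A$. A repair of a set of facts is a maximal subset without two distinct key-equal facts. A self-join-free Boolean conjunctive query is a finite set of atoms with distinct relation names; for a fact $A$, $\mathrm{atom}(A)$ is the atom of $q$ with the same relation name. A subset $\mathbf{o}\subseteq\mathbf{db}$ is a garbage set for $q_0$ in $\mathbf{db}$ if (1) for every $A\in\mathbf{o}$, $\mathrm{atom}(A)\in q_0$ and the block of $A$ in $\mathbf{db}$ is included in $\mathbf{o}$; and (2) there is a repair $\mathbf{r}$ of $\mathbf{o}$ such that for every valuation $\theta$ of the variables of $q$, if $\theta(q)\subseteq(\mathbf{db}\setminus\mathbf{o})\cup\mathbf{r}$ then $\theta(q_0)\cap\mathbf{r}=\emptyset$. Garbage sets are closed under union, so a unique maximal garbage set exists. *)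

(* Defs.v *)
From Stdlib Require Import List Arith.
Import ListNotations.

(* Modes: c (consistent) and i (possibly inconsistent). *)
Inductive mode := ModeC | ModeI.

Record relname := RelName
  { rn_id : nat; rn_arity : nat; rn_key : nat; rn_mode : mode }.

Definition wf_relname (R : relname) : Prop :=
  1 <= rn_key R /\ rn_key R <= rn_arity R.

Inductive term := TVar (x : nat) | TConst (c : nat).

Record atom := Atom { a_rel : relname; a_args : list term }.

Record fact := Fact { f_rel : relname; f_args : list nat }.

Definition key_equal (A B : fact) : Prop :=
  f_rel A = f_rel B /\
  firstn (rn_key (f_rel A)) (f_args A) = firstn (rn_key (f_rel B)) (f_args B).

Definition fset := fact -> Prop.
Definition subset (X Y : fset) : Prop := forall A, X A -> Y A.
Definition setD (X Y : fset) : fset := fun A => X A /\ ~ Y A.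
Definition setU (X Y : fset) : fset := fun A => X A \/ Y A.
Definition finite_fset (X : fset) : Prop :=
  exists s : list fact, forall A, X A <-> In A s.

Definition sjf_query (q : list atom) : Prop :=
  NoDup (map a_rel q) /\
  (forall a, In a q -> wf_relname (a_rel a) /\ length (a_args a) = rn_arity (a_rel a)).

Definition database (q : list atom) (db : fset) : Prop :=
  finite_fset db /\
  (forall A, db A -> length (f_args A) = rn_arity (f_rel A)) /\
  (forall A, db A -> exists a, In a q /\ a_rel a = f_rel A) /\
  (forall A B, db A -> db B -> rn_mode (f_rel A) = ModeC -> key_equal A B -> A = B).

Definition block (db : fset) (A : fact) : fset := fun B => db B /\ key_equal A B.

Definition consistent (X : fset) : Prop :=
  forall A B, X A -> X B -> key_equal A B -> A = B.

Definition repair (S r : fset) : Prop :=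
  subset r S /\ consistent r /\
  (forall r', subset r r' -> subset r' S -> consistent r' -> subset r' r).

Definition valuation := nat -> nat.
Definition val_term (th : valuation) (t : term) : nat :=
  match t with TVar x => th x | TConst c => c end.
Definition val_atom (th : valuation) (a : atom) : fact :=
  Fact (a_rel a) (map (val_term th) (a_args a)).

(* atom(A) belongs to q0: the atom of q with the relation name of A is in q0. *)
Definition atom_in (q q0 : list atom) (A : fact) : Prop :=
  exists a, In a q /\ a_rel a = f_rel A /\ In a q0.

Definition garbage_set (q q0 : list atom) (db o : fset) : Prop :=
  subset o db /\
  (forall A, o A -> atom_in q q0 A /\ subset (block db A) o) /\
  exists r, repair o r /\
    forall th : valuation,
      (forall a, In a q -> setU (setD db o) r (val_atom th a)) ->
      forall a, In a q0 -> ~ r (val_atom th a).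

Definition max_garbage_set (q q0 : list atom) (db o : fset) : Prop :=
  garbage_set q q0 db o /\
  forall o', garbage_set q q0 db o' -> subset o' o.

(* Main.v *)
Require Import Defs.
From Stdlib Require Import List Classical.

Lemma key_equal_sym A B : key_equal A B -> key_equal B A.
Proof. unfold key_equal. intros [H1 H2]. rewrite <- H1. split; congruence. Qed.

Lemma nodup_map_inj {X Y} (f : X -> Y) (l : list X) x y :
  NoDup (map f l) -> In x l -> In y l -> f x = f y -> x = y.
Proof.
  induction l as [|z l IH]; simpl; [tauto|].
  intros Hn Hx Hy Hf. inversion Hn as [|? ? Hnin Hn']; subst.
  destruct Hx as [<-|Hx]; destruct Hy as [<-|Hy]; auto.
  - exfalso; apply Hnin; rewrite Hf; apply in_map; auto.
  - exfalso; apply Hnin; rewrite <- Hf; apply in_map; auto.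
Qed.

Lemma mixed_cons (db o r'' r : fset) C D :
  (forall A, o A -> subset (block db A) o) -> subset r db -> 
  r'' C -> o C -> r D -> ~ o D -> key_equal C D -> False.
Proof.
  intros Hb Hrd HC HoC HD HoD Hk. apply HoD. apply (Hb C HoC). split; auto.
Qed.

Theorem lemma17 (q q0 : list atom) (db o : fset) :
  sjf_query q -> incl q0 q -> database q db -> garbage_set q q0 db o ->
  ((forall o' : fset, garbage_set q q0 (setD db o) o' -> forall A, ~ o' A) <->
   max_garbage_set q q0 db o).
Proof.
  intros Hq Hq0 Hdb Ho. 
  assert (Hob : forall A, o A -> subset (block db A) o) by (intros; apply Ho; auto).
  split.
  - intros Hemp. split; [exact Ho|].
    intros o'' [Hsub [Hblk [r'' [[Hr1 [Hr2 Hr3]] Hval]]]] A HA.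
    apply NNPP; intro HnA.
    apply (Hemp (fun B => o'' B /\ ~ o B)) with A; [|auto].
    split; [|split].
    + intros B [HB1 HB2]; split; auto.
    + intros B [HB1 HB2]; split; [apply Hblk; auto|].
      intros C [[HC1 HC2] HC3]. split; auto. apply (Hblk B HB1). split; auto.
    + exists (fun B => r'' B /\ ~ o B). split; [split; [|split]|].
      * intros B [HB1 HB2]; split; auto.
      * intros B C [HB1 _] [HC1 _] Hk; apply Hr2; auto.
      * intros r Hsr Hrs Hrc B HB.
        assert (Hrd : subset r db) by (intros C HC; apply Hsub, (Hrs C HC)).
        assert (HrnO : forall C, r C -> ~ o C) by (intros C HC; apply (Hrs C HC)).
        assert (Hsub' : subset (fun C => r'' C \/ r C) r'').
        { apply Hr3.
          - intros C HC; left; auto.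
          - intros C [HC|HC]; auto. apply Hrs; auto.
          - intros C D HC HD Hk.
            destruct HC as [HC|HC]; destruct HD as [HD|HD].
            + apply Hr2; auto.
            + destruct (classic (o C)) as [HoC|HoC].
              * exfalso; eapply mixed_cons; eauto.
              * apply Hrc; auto; apply Hsr; auto.
            + destruct (classic (o D)) as [HoD|HoD].
              * exfalso; eapply mixed_cons; eauto using key_equal_sym.
              * apply Hrc; auto; apply Hsr; auto.
            + apply Hrc; auto. }
        split; auto.
      * intros th Hth a Ha [Hra Hnoa].
        apply (Hval th) with a; auto.
        intros b Hb. destruct (Hth b Hb) as [[[H1 H2] H3]|[H1 H2]].
        -- left. split; [exact H1|]. intro H4. apply H3. split; auto.
        -- right; auto.
  - intros [_ Hmax] o' Ho' A HA.
    destruct Ho as [Hosub [Hoblk [r [[Hr1 [Hr2 Hr3]] Hval]]]].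
    destruct Ho' as [Hsub' [Hblk' [r' [[Hr1' [Hr2' Hr3']] Hval']]]].
    assert (Hdisj : forall B, o' B -> ~ o B) by (intros B HB; apply (Hsub' B HB)).
    assert (Hg : garbage_set q q0 db (setU o o')).
    { split; [|split].
      - intros B [HB|HB]; auto. apply Hsub'; auto.
      - intros B [HB|HB].
        + split; [apply Hoblk; auto|]. intros C HC; left; apply (Hoblk B HB); auto.
        + split; [apply Hblk'; auto|]. intros C [HC1 HC2].
          destruct (classic (o C)) as [HoC|HoC]; [left; auto|right].
          apply (Hblk' B HB). split; auto. split; auto.
      - exists (setU r r'). split; [split; [|split]|].
        + intros B [HB|HB]; [left; auto|right; auto].
        + intros C D [HC|HC] [HD|HD] Hk.
          * apply Hr2; auto.
          * exfalso. apply (Hdisj D); [apply Hr1'; auto|].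
            apply (Hoblk C (Hr1 C HC)). split; auto. apply Hsub', Hr1'; auto.
          * exfalso. apply (Hdisj C); [apply Hr1'; auto|].
            apply (Hoblk D (Hr1 D HD)). split; [apply Hsub', Hr1'; auto|].
            apply key_equal_sym; auto.
          * apply Hr2'; auto.
        + intros r'' Hs Hs' Hc B HB.
          destruct (Hs' B HB) as [HoB|HoB].
          * left. apply (Hr3 (fun C => r'' C /\ o C)); auto.
            -- intros C HC; split; [apply Hs; left; auto|apply Hr1; auto].
            -- intros C [_ HC]; auto.
            -- intros C D [HC _] [HD _]; apply Hc; auto.
          * right. apply (Hr3' (fun C => r'' C /\ o' C)); auto.
            -- intros C HC; split; [apply Hs; right; auto|apply Hr1'; auto].
            -- intros C [_ HC]; auto.
            -- intros C D [HC _] [HD _]; apply Hc; auto.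
        + intros th Hth.
          assert (Hn1 : forall a, In a q0 -> ~ r (val_atom th a)).
          { apply Hval. intros b Hb. destruct (Hth b Hb) as [[H1 H2]|[H|H]].
            - left. split; auto. intro; apply H2; left; auto.
            - right; auto.
            - left. apply Hsub'. apply Hr1'; auto. }
          assert (Hn2 : forall a, In a q -> ~ r (val_atom th a)).
          { intros a Ha Hra. destruct (Hoblk _ (Hr1 _ Hra)) as [[a' [Ha'1 [Ha'2 Ha'3]]] _].
            assert (a' = a).
            { apply (nodup_map_inj a_rel q); auto. apply Hq. }
            subst a'. apply (Hn1 a); auto. }
          intros a Ha [Hra|Hra]; [apply (Hn1 a); auto|].
          apply (Hval' th) with a; auto.
          intros b Hb. destruct (Hth b Hb) as [[H1 H2]|[H|H]].
          * left. split; [split|]; auto; intro; apply H2; [left|right]; auto.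
          * exfalso; apply (Hn2 b); auto.
          * right; auto. }
    apply (Hdisj A HA). apply (Hmax _ Hg). right; auto.
Qed.
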